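(* Let $m\geq 2$ be an integer, let $(\alpha_i)_{1\leq i\leq m}\in\left]0,1\right[^m$, and define $$\phi(\alpha_1,\ldots,\alpha_m)=\dfrac{1}{1+\dfrac{1}{\sum_{i=1}^m\dfrac{\alpha_i}{1-\alpha_i}}}.$$ Let $(\sigma_j)_{1\leq j\leq m}$ be the elementary symmetric polynomials in $(\alpha_i)_{1\leq i\leq m}$, i.e., $\sigma_j=\sum_{1\leq i_1<\cdots<i_j\leq m}\prod_{l=1}^j\alpha_{i_l}$ for every $j\in\{1,\ldots,m\}$. Then: (i) $\phi(\alpha_1,\ldots,\alpha_m)=\Big[\sum_{l=1}^{+\infty}\sum_{i=1}^{m}\alpha_{i}^{l}\Big]\Big/\Big[1+\sum_{l=1}^{+\infty}\sum_{i=1}^{m}\alpha_{i}^{l}\Big]$; (ii) $\phi(\alpha_1,\ldots,\alpha_m)=\Big[\sum_{j=1}^m(-1)^{j-1}j\sigma_j\Big]\Big/\Big[1+\sum_{j=2}^{m}(-1)^{j-1}(j-1)\sigma_j\Big]$; (iii) $\phi(\alpha_1,\ldots,\alpha_m)>\max_{1\leq i\leq m}\alpha_i$. *)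

(* Defs.v *)
From HB Require Import structures.
From mathcomp Require Import all_boot all_order all_algebra.
From mathcomp Require Import all_classical all_reals all_analysis.
Set Implicit Arguments. Unset Strict Implicit. Unset Printing Implicit Defensive.
Import Order.TTheory GRing.Theory Num.Theory.
Local Open Scope ring_scope.

Definition phi (R : realType) (m : nat) (a : 'I_m -> R) : R :=
  1 / (1 + 1 / (\sum_(i < m) a i / (1 - a i))).

Definition elsym (R : realType) (m : nat) (a : 'I_m -> R) (j : nat) : R :=
  \sum_(I : {set 'I_m} | #|I| == j) \prod_(i in I) a i.

Definition powsum (R : realType) (m : nat) (a : 'I_m -> R) (l : nat) : R :=
  \sum_(i < m) a i ^+ l.

(* Main.v *)
Require Import Defs.
From HB Require Import structures.
From mathcomp Require Import all_boot all_order all_algebra.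
From mathcomp Require Import all_classical all_reals all_analysis.
From mathcomp Require Import ring lra.
Import Order.TTheory GRing.Theory Num.Theory.
Local Open Scope ring_scope.

Lemma expand_prod (R : comRingType) (m : nat) (F G : 'I_m -> R) :
  \prod_i (F i + G i) =
  \sum_(J : {set 'I_m}) (\prod_(i in J) F i) * \prod_(i in ~: J) G i.
Proof.
rewrite bigA_distr; apply: eq_bigr => J _.
rewrite (bigID (mem J)) /=; congr (_ * _).
  by apply: eq_bigr => i ->.
rewrite [in RHS](eq_bigl (fun i => i \notin J)); last by move=> i; rewrite inE.
by apply: eq_bigr => i /negbTE ->.
Qed.

Lemma expandP (R : comRingType) (m : nat) (a : 'I_m -> R) :
  \prod_i (1 - a i) = \sum_(J : {set 'I_m}) (-1) ^+ #|J| * \prod_(i in J) a i.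
Proof.
under eq_bigr do rewrite addrC.
rewrite expand_prod; apply: eq_bigr => J _.
rewrite prodrN. rewrite big1_eq. by rewrite mulr1. Qed.

Lemma expandN (R : comRingType) (m : nat) (a : 'I_m -> R) (i : 'I_m) :
  a i * \prod_(k | k != i) (1 - a k) =
  \sum_(J : {set 'I_m}) (if i \in J then (-1) ^+ (#|J| - 1) * \prod_(k in J) a k else 0).
Proof.
have -> : a i * \prod_(k | k != i) (1 - a k) =
  \prod_k ((if k == i then a k else - a k) + (if k == i then 0 else 1)).
  rewrite [in RHS](bigD1 i) //= eqxx addr0; congr (_ * _).
  by apply: eq_bigr => k /negbTE ->; rewrite addrC.
rewrite expand_prod; apply: eq_bigr => J _.
case: ifPn => iJ.
  rewrite [X in _ * X]big1 ?mulr1; last first.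
    by move=> k; rewrite inE; case: eqP => // -> ; rewrite iJ.
  rewrite (big_setD1 i iJ) [in RHS](big_setD1 i iJ) /= eqxx.
  rewrite (cardsD1 i J) iJ add1n subn1 /= mulrCA -prodrN.
  congr (_ * _); apply: eq_bigr => k.
  by rewrite in_setD1 => /andP[/negbTE -> _].
have iC : i \in ~: J by rewrite inE.
by rewrite [X in _ * X](big_setD1 i iC) /= eqxx mul0r mulr0.
Qed.

Lemma elsym_sum (R : realType) (m : nat) (a : 'I_m -> R) (c : nat -> R) :
  \sum_(j < m.+1) c j * elsym a j =
  \sum_(J : {set 'I_m}) c #|J| * \prod_(i in J) a i.
Proof.
rewrite /elsym; under eq_bigr do rewrite mulr_sumr.
rewrite (exchange_big_dep xpredT) //=; apply: eq_bigr => J _.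
have hJ : (#|J| < m.+1)%N by rewrite ltnS; apply: leq_trans (max_card _) _; rewrite card_ord.
rewrite (big_pred1 (inord #|J|)) ?inordK // => j.
by rewrite /= -val_eqE /= inordK // eq_sym.
Qed.

Lemma sum_from1 (R : realType) (m : nat) (f : nat -> R) : f 0%N = 0 ->
  \sum_(1 <= j < m.+1) f j = \sum_(j < m.+1) f j.
Proof. by move=> f0; symmetry; rewrite -(big_mkord xpredT f) (big_ltn (ltn0Sn _)) f0 add0r. Qed.

Lemma sum_from2 (R : realType) (m : nat) (f : nat -> R) : (1 <= m)%N ->
  f 0%N = 0 -> f 1%N = 0 ->
  \sum_(2 <= j < m.+1) f j = \sum_(j < m.+1) f j.
Proof.
by move=> hm f0 f1; symmetry; rewrite -(big_mkord xpredT f) (big_ltn (ltn0Sn _)) (big_ltn _) ?ltnS // f0 f1 !add0r.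
Qed.

Arguments elsym_sum [R m] a c.
Arguments sum_from1 [R m] f.
Arguments sum_from2 [R m] f.

Section Main.
Variables (R : realType) (m : nat) (a : 'I_m -> R).
Hypothesis ha : forall i, 0 < a i < 1.

Let S := \sum_i a i / (1 - a i).
Let P := \prod_i (1 - a i).

Lemma t_gt0 i : 0 < a i / (1 - a i).
Proof. by have /andP[h1 h2] := ha i; rewrite divr_gt0 // subr_gt0. Qed.

Lemma P_gt0 : 0 < P.
Proof. by apply: prodr_gt0 => i _; have /andP[h1 h2] := ha i; rewrite subr_gt0. Qed.

Lemma S_gt0 (hm : (0 < m)%N) : 0 < S.
Proof.
rewrite /S (bigD1 (Ordinal hm)) //=; apply: ltr_pwDl; first exact: t_gt0.
by apply: sumr_ge0 => i _; apply: ltW; apply: t_gt0.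
Qed.

Lemma hN : \sum_(1 <= j < m.+1) (-1) ^+ (j - 1) * j%:R * elsym a j = S * P.
Proof.
rewrite (sum_from1 (fun j => (-1) ^+ (j - 1) * j%:R * elsym a j)); last by rewrite mulr0 mul0r.
rewrite (elsym_sum a (fun j => (-1) ^+ (j - 1) * j%:R)).
rewrite /S mulr_suml.
have -> : \sum_i a i / (1 - a i) * P = \sum_i a i * \prod_(k | k != i) (1 - a k).
  apply: eq_bigr => i _; rewrite /P (bigD1 i) //= mulrA divfK //.
  by have /andP[h1 h2] := ha i; rewrite subr_eq0 eq_sym lt_eqF.
rewrite [RHS](eq_bigr _ (fun i _ => @expandN _ _ a i)).
rewrite exchange_big /=; apply: eq_bigr => J _.
rewrite -big_mkcond /= sumr_const -mulr_natr; ring.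
Qed.

Lemma hD (hm : (1 <= m)%N) :
  1 + \sum_(2 <= j < m.+1) (-1) ^+ (j - 1) * (j - 1)%:R * elsym a j = S * P + P.
Proof.
rewrite (sum_from2 (fun j => (-1) ^+ (j - 1) * (j - 1)%:R * elsym a j)) //;
  last 2 first.
- by rewrite mulr0 mul0r.
- by rewrite mulr0 mul0r.
rewrite (elsym_sum a (fun j => (-1) ^+ (j - 1) * (j - 1)%:R)).
rewrite -hN (sum_from1 (fun j => (-1) ^+ (j - 1) * j%:R * elsym a j)); last by rewrite mulr0 mul0r.
rewrite (elsym_sum a (fun j => (-1) ^+ (j - 1) * j%:R)) /P expandP -big_split /=.
have h1 : \sum_(J : {set 'I_m}) (J == finset.set0)%:R = 1 :> R.
  rewrite (bigD1 finset.set0) //= eqxx big1 ?addr0 // => J /negbTE -> //.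
rewrite -[X in X + _ = _]h1 -big_split /=; apply: eq_bigr => J _.
case hc: #|J| => [|k].
  move/eqP: hc; rewrite cards_eq0 => /eqP ->.
  by rewrite eqxx big_set0 /= sub0n; ring.
have -> : (J == finset.set0) = false by apply/eqP => E; rewrite E cards0 in hc.
rewrite subn1 /= exprS; ring.
Qed.


Lemma phiE (hm : (0 < m)%N) : phi a = S / (S + 1).
Proof.
have hS := S_gt0 hm; rewrite /phi.
have h0 : S != 0 by rewrite gt_eqF.
have h1 : S + 1 != 0 by rewrite gt_eqF // addr_gt0.
rewrite -/S; clearbody S; field; by rewrite h0 h1.
Qed.

Lemma part2 (hm : (1 <= m)%N) :
  phi a = (\sum_(1 <= j < m.+1) (-1) ^+ (j - 1) * j%:R * elsym a j)
              / (1 + \sum_(2 <= j < m.+1) (-1) ^+ (j - 1) * (j - 1)%:R * elsym a j).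
Proof.
rewrite phiE // hN hD //.
have hP : P != 0 by rewrite gt_eqF // P_gt0.
have h1 : S + 1 != 0 by rewrite gt_eqF // addr_gt0 // S_gt0.
field; rewrite // -[X in _ + X]mul1r -mulrDl mulf_neq0 // addrC.
Qed.

Lemma part3 (hm : (2 <= m)%N) : \big[Num.max/0]_(i < m) a i < phi a.
Proof.
have hm0 : (0 < m)%N by apply: leq_trans hm.
have hS := S_gt0 hm0.
apply: bigmax_lt => [|i _].
  by rewrite phiE // divr_gt0 // addr_gt0.
pose j0 : 'I_m := Ordinal hm0. pose j1 : 'I_m := Ordinal hm.
have [j hj] : exists j, j != i.
  case: (eqVneq i j0) => [->|h]; last by exists j0; rewrite eq_sym.
  by exists j1.
have ht : a i / (1 - a i) < S.
  rewrite /S (bigD1 i) //= ltrDl (bigD1 j) //=.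
  apply: ltr_pwDl; first exact: t_gt0.
  by apply: sumr_ge0 => k _; apply: ltW; apply: t_gt0.
have /andP[h1 h2] := ha i.
rewrite ltr_pdivrMr ?subr_gt0 // in ht.
rewrite phiE // ltr_pdivlMr ?addr_gt0 //.
nra.
Qed.


Lemma partial_eq n :
  \sum_(1 <= l < n.+1) powsum a l = \sum_i series (geometric (a i) (a i)) n.
Proof.
elim: n => [|n IH].
  rewrite big_geq // big1 // => i _.
  by rewrite /series /= big_geq.
rewrite big_nat_recr //= IH /powsum -big_split /=; apply: eq_bigr => i _.
by rewrite /series /= big_nat_recr //= exprS.
Qed.

Lemma hcv : ((fun n => \sum_(1 <= l < n) powsum a l) @ \oo --> S)%classic.
Proof.
rewrite -cvg_shiftS /=.
have -> : (fun n => \sum_(1 <= l < n.+1) powsum a l) =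
   (fun n => \sum_i series (geometric (a i) (a i)) n).
  by apply: funext => n; apply: partial_eq.
rewrite /S; apply: (cvg_big add_continuous) => i _. apply: cvg_geometric_series.
by have /andP[h1 h2] := ha i; rewrite ger0_norm // ltW.
Qed.

Lemma part1 (hm : (0 < m)%N) :
  cvgn (fun n => \sum_(1 <= l < n) powsum a l)
      /\ phi a = (\big[+%R/0]_(1 <= l <oo) powsum a l)
                 / (1 + \big[+%R/0]_(1 <= l <oo) powsum a l).
Proof.
split; first exact: (cvgP _ hcv).
by rewrite (cvg_lim _ hcv) // phiE // addrC.
Qed.

End Main.

Theorem proposition2p6 (R : realType) (m : nat) (hm : (2 <= m)%N)
  (a : 'I_m -> R) (ha : forall i, 0 < a i < 1) :
  [/\ cvgn (fun n => \sum_(1 <= l < n) powsum a l)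
      /\ phi a = (\big[+%R/0]_(1 <= l <oo) powsum a l)
                 / (1 + \big[+%R/0]_(1 <= l <oo) powsum a l),
      phi a = (\sum_(1 <= j < m.+1) (-1) ^+ (j - 1) * j%:R * elsym a j)
              / (1 + \sum_(2 <= j < m.+1) (-1) ^+ (j - 1) * (j - 1)%:R * elsym a j)
    & \big[Num.max/0]_(i < m) a i < phi a].
Proof.
have hm0 : (0 < m)%N by apply: leq_trans hm.
split.
- exact: part1.
- exact: part2 (ltnW hm).
- exact: part3.
Qed.
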